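(* Let $(A,\Delta,\epsilon)$ be a biunital bialgebra over $k$, and let $W$ be the left ideal of $A\otimes A$ generated by $\{\epsilon(a)(1\otimes 1)-\Delta(a)\mid a\in A\}$. Then the left $A\otimes A$-module $(A\otimes A)/W$ is a preantipode for the modulation $(A,\boldsymbol{\Delta},\boldsymbol{\epsilon})$ of $A$ (where $\boldsymbol\Delta$ is $A\otimes A$ with left $A\otimes A$-action by multiplication and right $A$-action $x\cdot b=x\Delta(b)$, and $\boldsymbol\epsilon=k$ with right $A$-action $\lambda\cdot b=\lambda\epsilon(b)$). If moreover $A$ is a Hopf algebra with antipode $S$, then $(A\otimes A)/W$ is isomorphic, as an $(A,A^{op})$-bimodule, to the modulation $\mathbf{S}$ of $S$ (viewed as a homomorphism $A^{op}\to A$), namely $A$ with $a\cdot x\cdot b=a\,x\,S(b)$, via $[a\otimes b]\mapsto aS(b)$; consequently $(A,\boldsymbol\Delta,\boldsymbol\epsilon,\mathbf S)$ is a hopfish algebra.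
   Context: $k$ is a commutative ring, $\otimes=\otimes_k$, and ${}^*$ denotes the $k$-dual. A sesquiunital sesquialgebra over $k$ is a unital $k$-algebra $A$ with an $(A\otimes A,A)$-bimodule $\boldsymbol\Delta$ (coproduct) and a right $A$-module $\boldsymbol\epsilon$ (counit) such that $(A\otimes\boldsymbol\Delta)\otimes_{A\otimes A}\boldsymbol\Delta\cong(\boldsymbol\Delta\otimes A)\otimes_{A\otimes A}\boldsymbol\Delta$ as $(A\otimes A\otimes A,A)$-bimodules, and $(\boldsymbol\epsilon\otimes A)\otimes_{A\otimes A}\boldsymbol\Delta$ and $(A\otimes\boldsymbol\epsilon)\otimes_{A\otimes A}\boldsymbol\Delta$ are both isomorphic to $A$ as $(A,A)$-bimodules. The space $Z'=\mathrm{Hom}_A(\boldsymbol\epsilon,\boldsymbol\Delta)$ of right $A$-module maps is a right $A\otimes A$-module via $(g b)(u)=g(bu)$. A preantipode is a left $A\otimes A$-module $\mathbf S$ together with an isomorphism of right $A\otimes A$-modules $\mathbf S^*\cong Z'$; $\mathbf S$ is regarded as an $(A,A^{op})$-bimodule (left $A$ from the first factor, right $A^{op}$ from the second). A preantipode is an antipode, and $A$ with it is a hopfish algebra, if $\mathbf S$ is free of rank one as a left $A$-module. *)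

(* Defs.v *)
From HB Require Import structures.
From mathcomp Require Import all_boot all_order all_algebra.
Set Implicit Arguments. Unset Strict Implicit. Unset Printing Implicit Defensive.
Import GRing.Theory.
Local Open Scope ring_scope.

Section HopfishDefs.
Variable k : comNzRingType.

Definition klinear (U V : lmodType k) (f : U -> V) : Prop :=
  forall (c : k) (x y : U), f (c *: x + y) = c *: f x + f y.

Definition kform (U : lmodType k) (f : U -> k) : Prop :=
  forall (c : k) (x y : U), f (c *: x + y) = c * f x + f y.

Definition bilinear (U V W : lmodType k) (f : U -> V -> W) : Prop :=
  (forall v, klinear (fun u => f u v)) /\ (forall u, klinear (f u)).

Definition trilinear (U W : lmodType k) (f : U -> U -> U -> W) : Prop :=
  (forall y z, klinear (fun x => f x y z)) /\
  (forall x z, klinear (fun y => f x y z)) /\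
  (forall x y, klinear (f x y)).

Definition is_tensor (U V T : lmodType k) (t : U -> V -> T) : Prop :=
  bilinear t /\
  forall (M : lmodType k) (f : U -> V -> M), bilinear f ->
    exists! g : T -> M, klinear g /\ forall u v, g (t u v) = f u v.

Definition is_tensor3 (U T : lmodType k) (t3 : U -> U -> U -> T) : Prop :=
  trilinear t3 /\
  forall (M : lmodType k) (f : U -> U -> U -> M), trilinear f ->
    exists! g : T -> M, klinear g /\ forall x y z, g (t3 x y z) = f x y z.

Definition is_tensor_algebra (A B : algType k) (t : A -> A -> B) : Prop :=
  is_tensor t /\ t 1 1 = 1 /\
  forall a b c d, t a b * t c d = t (a * c) (b * d).

Section Bialg.
Variables (A B : algType k) (t : A -> A -> B) (D : A -> B) (e : A -> k).

Definition counit_left : Prop :=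
  exists g : B -> A, klinear g /\ (forall a b, g (t a b) = e a *: b) /\
                     forall a, g (D a) = a.

Definition counit_right : Prop :=
  exists g : B -> A, klinear g /\ (forall a b, g (t a b) = e b *: a) /\
                     forall a, g (D a) = a.

(* (D (x) id) o D = (id (x) D) o D, in any triple tensor product A(x)A(x)A *)
Definition coassociative : Prop :=
  forall (T : lmodType k) (t3 : A -> A -> A -> T), is_tensor3 t3 ->
  exists (El Er : A -> B -> T) (D1 D2 : B -> T),
    (forall y, klinear (El y) /\ forall p q, El y (t p q) = t3 p q y) /\
    (forall x, klinear (Er x) /\ forall p q, Er x (t p q) = t3 x p q) /\
    klinear D1 /\ (forall x y, D1 (t x y) = El y (D x)) /\
    klinear D2 /\ (forall x y, D2 (t x y) = Er x (D y)) /\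
    forall a, D1 (D a) = D2 (D a).

Definition is_bialgebra : Prop :=
  (klinear D /\ (forall a b, D (a * b) = D a * D b) /\ D 1 = 1) /\
  (kform e /\ (forall a b, e (a * b) = e a * e b) /\ e 1 = 1) /\
  counit_left /\ counit_right /\ coassociative.

(* S is an antipode: m (S (x) id) D = m (id (x) S) D = unit o counit *)
Definition is_antipode (S : A -> A) : Prop :=
  klinear S /\
  (exists g : B -> A, klinear g /\ (forall a b, g (t a b) = S a * b) /\
                      forall a, g (D a) = e a *: 1) /\
  (exists g : B -> A, klinear g /\ (forall a b, g (t a b) = a * S b) /\
                      forall a, g (D a) = e a *: 1).

Definition Wideal (x : B) : Prop :=
  exists (n : nat) (y : 'I_n -> B) (a : 'I_n -> A),
    x = \sum_(i < n) y i * (e (a i) *: 1 - D (a i)).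

Definition is_quotient_by (Q : lmodType k) (pi : B -> Q) (act : B -> Q -> Q)
  (Wp : B -> Prop) : Prop :=
  klinear pi /\ (forall q, exists x, pi x = q) /\
  (forall b x, pi (b * x) = act b (pi x)) /\
  (forall x, pi x = 0 <-> Wp x).

(* Z' : right A-module maps from Delta = (A(x)A, x.a = x D(a))
   to epsilon = (k, c.a = c e(a)); right B-module via (g b)(u) = g (b u) *)
Definition Zprime (g : B -> k) : Prop :=
  (forall x y, g (x + y) = g x + g y) /\
  (forall x a, g (x * D a) = g x * e a).

(* The left B-module (Q, act) is a preantipode for the modulation (A, Delta, epsilon):
   an isomorphism of right B-modules Q^* ~ Z'. *)
Definition is_preantipode (Q : lmodType k) (act : B -> Q -> Q) : Prop :=
  exists Phi : (Q -> k) -> (B -> k),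
    (forall phi, kform phi -> Zprime (Phi phi)) /\
    (forall phi psi, kform phi -> kform psi ->
       Phi (fun q => phi q + psi q) = (fun u => Phi phi u + Phi psi u)) /\
    (forall phi b, kform phi ->
       Phi (fun q => phi (act b q)) = (fun u => Phi phi (b * u))) /\
    (forall phi psi, kform phi -> kform psi -> Phi phi = Phi psi -> phi = psi) /\
    (forall g, Zprime g -> exists phi, kform phi /\ Phi phi = g).

Definition free_rank_one (Q : lmodType k) (act : B -> Q -> Q) : Prop :=
  exists q0 : Q, forall q, exists! a : A, q = act (t a 1) q0.

Definition is_hopfish (Q : lmodType k) (act : B -> Q -> Q) : Prop :=
  is_preantipode act /\ free_rank_one act.

End Bialg.
End HopfishDefs.

(* Main.v *)
Require Import Defs.
From HB Require Import structures.
From mathcomp Require Import all_boot all_order all_algebra.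
From mathcomp Require Import boolp.
Set Implicit Arguments. Unset Strict Implicit. Unset Printing Implicit Defensive.
Import GRing.Theory.
Local Open Scope ring_scope.

Section KLin.
Variable k : comNzRingType.
Lemma klin0 (U V : lmodType k) (g : U -> V) : klinear g -> g 0 = 0.
Proof.
move=> h; have := h 1 0 0; rewrite scaler0 addr0 scale1r => /eqP.
by rewrite -subr_eq0 opprD addrA subrr sub0r oppr_eq0 => /eqP.
Qed.
Lemma klinD (U V : lmodType k) (g : U -> V) : klinear g -> forall x y, g (x + y) = g x + g y.
Proof. by move=> h x y; rewrite -{1}[x]scale1r h scale1r. Qed.
Lemma klinZ (U V : lmodType k) (g : U -> V) : klinear g -> forall c x, g (c *: x) = c *: g x.
Proof. by move=> h c x; rewrite -[c *: x]addr0 h klin0 // addr0. Qed.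
Lemma klinN (U V : lmodType k) (g : U -> V) : klinear g -> forall x, g (- x) = - g x.
Proof. by move=> h x; rewrite -scaleN1r klinZ // scaleN1r. Qed.
Lemma klinB (U V : lmodType k) (g : U -> V) : klinear g -> forall x y, g (x - y) = g x - g y.
Proof. by move=> h x y; rewrite klinD // klinN. Qed.
End KLin.

Section Tens3.
Variables (k : comNzRingType) (U : lmodType k).
Definition X3 := (U * U * U)%type.
Definition L3 := seq (k * X3).
Definition ev3 (M : lmodType k) (f : U -> U -> U -> M) (l : L3) : M :=
  \sum_(p <- l) p.1 *: f p.2.1.1 p.2.1.2 p.2.2.
Definition Req (l1 l2 : L3) : Prop := forall (M : lmodType k) (f : U -> U -> U -> M),
  trilinear f -> ev3 f l1 = ev3 f l2.
Definition T3 := {P : L3 -> Prop | exists l, P = Req l}.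
Definition cls (l : L3) : T3 := exist _ (Req l) (ex_intro _ l erefl).
Lemma sig_eq3 (P Q : T3) : proj1_sig P = proj1_sig Q -> P = Q.
Proof. case: P Q => [p hp] [q hq] /= e; subst q; f_equal; apply: Prop_irrelevance. Qed.
Lemma cls_eq l1 l2 : Req l1 l2 -> cls l1 = cls l2.
Proof.
move=> h; apply: sig_eq3 => /=; apply: funext => l; apply: propext; split.
  by move=> h2 M f hf; rewrite -(h M f hf) (h2 M f hf).
by move=> h2 M f hf; rewrite (h M f hf) (h2 M f hf).
Qed.
Lemma cls_inj l1 l2 : cls l1 = cls l2 -> Req l1 l2.
Proof. move=> /(congr1 (@proj1_sig _ _)) /= ->; by []. Qed.
Definition rep (x : T3) : L3 := proj1_sig (cid (proj2_sig x)).
Lemma clsK x : cls (rep x) = x.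
Proof. apply: sig_eq3; rewrite /rep; case: (cid _) => l /= ->; by []. Qed.
Lemma ev_rep l (M : lmodType k) (f : U -> U -> U -> M) : trilinear f -> ev3 f (rep (cls l)) = ev3 f l.
Proof. move=> hf; exact: (cls_inj (clsK (cls l))). Qed.
Lemma ext3 x y : (forall (M : lmodType k) (f : U -> U -> U -> M), trilinear f -> ev3 f (rep x) = ev3 f (rep y)) -> x = y.
Proof. by move=> h; rewrite -(clsK x) -(clsK y); apply: cls_eq. Qed.

Definition smap (c : k) (l : L3) : L3 := [seq (c * p.1, p.2) | p <- l].
Lemma ev3_cat (M : lmodType k) (f : U -> U -> U -> M) l1 l2 : ev3 f (l1 ++ l2) = ev3 f l1 + ev3 f l2.
Proof. by rewrite /ev3 big_cat. Qed.
Lemma ev3_sc (M : lmodType k) (f : U -> U -> U -> M) c l : ev3 f (smap c l) = c *: ev3 f l.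
Proof. by rewrite /ev3 big_map scaler_sumr; apply: eq_bigr => p _; rewrite scalerA. Qed.

Definition add3 x y := cls (rep x ++ rep y).
Definition sc3 c x := cls (smap c (rep x)).
Definition opp3 x := sc3 (-1) x.
Definition zero3 := cls [::].

Lemma evA (M : lmodType k) (f : U -> U -> U -> M) x y : trilinear f -> ev3 f (rep (add3 x y)) = ev3 f (rep x) + ev3 f (rep y).
Proof. by move=> hf; rewrite ev_rep // ev3_cat. Qed.
Lemma evS (M : lmodType k) (f : U -> U -> U -> M) c x : trilinear f -> ev3 f (rep (sc3 c x)) = c *: ev3 f (rep x).
Proof. by move=> hf; rewrite ev_rep // ev3_sc. Qed.
Lemma evZ (M : lmodType k) (f : U -> U -> U -> M) : trilinear f -> ev3 f (rep zero3) = 0.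
Proof. by move=> hf; rewrite ev_rep // /ev3 big_nil. Qed.

Lemma add3A : associative add3.
Proof. by move=> x y z; apply: ext3 => M f hf; rewrite !evA // addrA. Qed.
Lemma add3C : commutative add3.
Proof. by move=> x y; apply: ext3 => M f hf; rewrite !evA // addrC. Qed.
Lemma add30 : left_id zero3 add3.
Proof. by move=> x; apply: ext3 => M f hf; rewrite !evA // evZ // add0r. Qed.
Lemma add3N : left_inverse zero3 opp3 add3.
Proof. by move=> x; apply: ext3 => M f hf; rewrite !evA // evS // evZ // scaleN1r addNr. Qed.

HB.instance Definition _ := gen_eqMixin T3.
HB.instance Definition _ := gen_choiceMixin T3.
HB.instance Definition _ := GRing.isZmodule.Build T3 add3A add3C add30 add3N.
Lemma evD (M : lmodType k) (f : U -> U -> U -> M) (x y : T3) : trilinear f -> ev3 f (rep (x + y)) = ev3 f (rep x) + ev3 f (rep y).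
Proof. exact: evA. Qed.
Lemma ev0 (M : lmodType k) (f : U -> U -> U -> M) : trilinear f -> ev3 f (rep (0 : T3)) = 0.
Proof. exact: evZ. Qed.

Lemma sc3A a b v : sc3 a (sc3 b v) = sc3 (a * b) v.
Proof. by apply: ext3 => M f hf; rewrite !evS // scalerA. Qed.
Lemma sc31 : left_id 1 sc3.
Proof. by move=> x; apply: ext3 => M f hf; rewrite !evS // scale1r. Qed.
Lemma sc3Dr : right_distributive sc3 +%R.
Proof. by move=> c x y; apply: ext3 => M f hf; rewrite !evS // !evD // !evS // scalerDr. Qed.
Lemma sc3Dl v : {morph sc3^~ v: a b / a + b}.
Proof. by move=> a b; apply: ext3 => M f hf; rewrite !evD // !evS // scalerDl. Qed.

HB.instance Definition _ := GRing.Zmodule_isLmodule.Build k T3 sc3A sc31 sc3Dr sc3Dl.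
Lemma evZs (M : lmodType k) (f : U -> U -> U -> M) c (x : T3) : trilinear f -> ev3 f (rep (c *: x)) = c *: ev3 f (rep x).
Proof. exact: evS. Qed.

Definition t3 (x y z : U) : T3 := cls [:: (1, (x, y, z))].

Lemma ev_t3 (M : lmodType k) (f : U -> U -> U -> M) x y z : trilinear f -> ev3 f (rep (t3 x y z)) = f x y z.
Proof. by move=> hf; rewrite ev_rep // /ev3 big_seq1 /= scale1r. Qed.

Lemma t3_tensor : is_tensor3 t3.
Proof.
split.
  split; [|split] => a b c x y.
  - apply: ext3 => M f hf; have [h1 [h2 h3]] := hf.
    by rewrite evD // evZs // !ev_t3 // h1.
  - apply: ext3 => M f hf; have [h1 [h2 h3]] := hf.
    by rewrite evD // evZs // !ev_t3 // h2.
  - apply: ext3 => M f hf; have [h1 [h2 h3]] := hf.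
    by rewrite evD // evZs // !ev_t3 // h3.
move=> M f hf.
have clsnil : cls [::] = 0 by [].
have clscons : forall p l, cls (p :: l) = p.1 *: t3 p.2.1.1 p.2.1.2 p.2.2 + cls l.
  move=> p l; apply: ext3 => M' f' hf'.
  by rewrite evD // evZs // ev_t3 // !ev_rep // /ev3 big_cons.
exists (fun x => ev3 f (rep x)); split.
  split; first by move=> c x y; rewrite evD // evZs.
  by move=> x y z; rewrite ev_t3.
move=> g' [hl ht]; apply: funext => x.
have gl : forall l, g' (cls l) = ev3 f l.
  elim=> [|p l IH]; first by rewrite clsnil klin0 // /ev3 big_nil.
  by rewrite clscons hl ht IH /ev3 big_cons.
by rewrite -{2}(clsK x) gl.
Qed.
End Tens3.

Section Main.
Variables (k : comNzRingType) (A B : algType k) (t : A -> A -> B) (D : A -> B) (e : A -> k).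
Hypothesis Hten : is_tensor t.
Hypothesis tmul : forall a b c d, t a b * t c d = t (a * c) (b * d).
Hypothesis t11 : t 1 1 = 1.
Hypothesis Dlin : klinear D.
Hypothesis Dmul : forall a b, D (a * b) = D a * D b.
Hypothesis D1 : D 1 = 1.
Hypothesis elin : kform e.
Hypothesis emul : forall a b, e (a * b) = e a * e b.
Hypothesis e1 : e 1 = 1.
Variables (gl gr : B -> A).
Hypotheses (gllin : klinear gl) (glt : forall a b, gl (t a b) = e a *: b) (glD : forall a, gl (D a) = a).
Hypotheses (grlin : klinear gr) (grt : forall a b, gr (t a b) = e b *: a) (grD : forall a, gr (D a) = a).
Variables (El Er : A -> B -> T3 A) (D1' D2' : B -> T3 A).
Hypotheses (hEl : forall y, klinear (El y) /\ forall p q, El y (t p q) = t3 p q y)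
  (hEr : forall x, klinear (Er x) /\ forall p q, Er x (t p q) = t3 x p q)
  (D1l : klinear D1') (D1t : forall x y, D1' (t x y) = El y (D x))
  (D2l : klinear D2') (D2t : forall x y, D2' (t x y) = Er x (D y))
  (hco : forall a, D1' (D a) = D2' (D a)).

Lemma tL z c u v : t (c *: u + v) z = c *: t u z + t v z.
Proof. by case: Hten => [[h _] _]; exact: (h z). Qed.
Lemma tR z c u v : t z (c *: u + v) = c *: t z u + t z v.
Proof. by case: Hten => [[_ h] _]; exact: (h z). Qed.
Lemma tDl u v z : t (u + v) z = t u z + t v z.
Proof. by rewrite -{1}[u]scale1r tL scale1r. Qed.
Lemma tZl c u z : t (c *: u) z = c *: t u z.
Proof. exact: (klinZ (g := fun u => t u z) (tL z)). Qed.
Lemma tDr u v z : t z (u + v) = t z u + t z v.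
Proof. by rewrite -{1}[u]scale1r tR scale1r. Qed.
Lemma tZr c u z : t z (c *: u) = c *: t z u.
Proof. exact: (klinZ (tR z)). Qed.

Lemma extB (M : lmodType k) (g1 g2 : B -> M) : klinear g1 -> klinear g2 ->
  (forall u v, g1 (t u v) = g2 (t u v)) -> forall x, g1 x = g2 x.
Proof.
move=> h1 h2 h x; case: Hten => _ univ.
have bil : Defs.bilinear (fun u v => g1 (t u v)).
  by split => [v|u] c a b /=; rewrite ?tL ?tR h1.
have [g [_ uq]] := univ M _ bil.
have E1 := uq g1 (conj h1 (fun u v => erefl)).
have E2 := uq g2 (conj h2 (fun u v => esym (h u v))).
by rewrite -E1 -E2.
Qed.

Lemma e0 : e 0 = 0.
Proof.
have := elin 1 0 0; rewrite scaler0 addr0 mul1r => /eqP.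
by rewrite -subr_eq0 opprD addrA subrr sub0r oppr_eq0 => /eqP.
Qed.
Lemma eZ c x : e (c *: x) = c * e x.
Proof. by rewrite -[c *: x]addr0 elin e0 addr0. Qed.

Lemma klin_mulr (R : algType k) (a : R) : klinear (fun x : R => x * a).
Proof. by move=> c x y; rewrite mulrDl -scalerAl. Qed.
Lemma klin_mull (R : algType k) (a : R) : klinear (fun x : R => a * x).
Proof. by move=> c x y; rewrite mulrDr scalerAr. Qed.
Lemma klin_comp (U V W : lmodType k) (f : U -> V) (g : V -> W) :
  klinear f -> klinear g -> klinear (fun x => g (f x)).
Proof. by move=> hf hg c x y; rewrite hf hg. Qed.

Lemma T3map (M : lmodType k) (F : A -> A -> A -> M) : trilinear F ->
  exists G : T3 A -> M, klinear G /\ forall x y z, G (t3 x y z) = F x y z.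
Proof. by move=> hF; have [_ u] := t3_tensor A; have [G [h _]] := u M F hF; exists G. Qed.

Variables (Q : lmodType k) (pi : B -> Q) (act : B -> Q -> Q).
Hypothesis Hq : is_quotient_by pi act (Wideal D e).

Lemma pilin : klinear pi. Proof. by case: Hq. Qed.
Lemma pisurj q : exists x, pi x = q. Proof. by case: Hq => _ [h _]. Qed.
Lemma piact b x : pi (b * x) = act b (pi x). Proof. by case: Hq => _ [_ [h _]]. Qed.
Lemma piker x : pi x = 0 <-> Wideal D e x. Proof. by case: Hq => _ [_ [_ h]]. Qed.

Lemma W1 y a : Wideal D e (y * (e a *: 1 - D a)).
Proof. by exists 1%N, (fun _ => y), (fun _ => a); rewrite big_ord1. Qed.

Lemma piDe a y : pi (y * D a) = e a *: pi y.
Proof.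
have h : pi (y * (e a *: 1 - D a)) = 0 by apply/piker/W1.
rewrite mulrBr -scalerAr mulr1 (klinB pilin) (klinZ pilin) in h.
by apply/eqP; rewrite eq_sym -subr_eq0 h.
Qed.

Lemma W_vanish (M : zmodType) (g : B -> M) : (forall x y, g (x + y) = g x + g y) ->
  (forall y a, g (y * (e a *: 1 - D a)) = 0) -> forall x, Wideal D e x -> g x = 0.
Proof.
move=> gD gt x [n [y [a ->]]].
have g0 : g 0 = 0.
  by have /eqP := gD 0 0; rewrite addr0 -subr_eq0 opprD addrA subrr sub0r oppr_eq0 => /eqP.
apply: (big_ind (fun x => g x = 0)) => //.
by move=> u v hu hv; rewrite gD hu hv addr0.
Qed.

Lemma kfD (phi : Q -> k) : kform phi -> forall x y, phi (x + y) = phi x + phi y.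
Proof. by move=> h x y; rewrite -{1}[x]scale1r h mul1r. Qed.
Lemma kf0 (phi : Q -> k) : kform phi -> phi 0 = 0.
Proof.
by move=> h; have /eqP := kfD h 0 0; rewrite addr0 -subr_eq0 opprD addrA subrr sub0r oppr_eq0 => /eqP.
Qed.
Lemma kfZ (phi : Q -> k) : kform phi -> forall c x, phi (c *: x) = c * phi x.
Proof. by move=> h c x; rewrite -[c *: x]addr0 h kf0 // addr0. Qed.

Definition rp (q : Q) : B := proj1_sig (cid (pisurj q)).
Lemma rpK q : pi (rp q) = q.
Proof. exact: (proj2_sig (cid (pisurj q))). Qed.

Lemma part1 : is_preantipode D e act.
Proof.
exists (fun phi u => phi (pi u)); split; [|split; [|split; [|split]]].
- move=> phi hphi; split.
    by move=> x y; rewrite (klinD pilin) kfD.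
  by move=> x a; rewrite piDe kfZ // mulrC.
- by [].
- by move=> phi b _; apply: funext => u; rewrite piact.
- move=> phi psi _ _ h; apply: funext => q; have [x <-] := pisurj q.
  exact: (congr1 (fun f => f x) h).
move=> g [gD gDe].
have g0 : g 0 = 0.
  by have /eqP := gD 0 0; rewrite addr0 -subr_eq0 opprD addrA subrr sub0r oppr_eq0 => /eqP.
have gN : forall x, g (- x) = - g x.
  by move=> x; apply/eqP; rewrite -addr_eq0 -gD addNr g0.
have gB : forall x y, g (x - y) = g x - g y by move=> x y; rewrite gD gN.
have gZ : forall c y, g (c *: y) = g y * c.
  move=> c y; have := gDe y (c *: 1).
  by rewrite (klinZ Dlin) D1 -scalerAr mulr1 eZ e1 mulr1.
have gW : forall x, Wideal D e x -> g x = 0.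
  apply: W_vanish => // y a.
  by rewrite mulrBr gB -scalerAr mulr1 gZ gDe mulrC subrr.
have gwd : forall x, g (rp (pi x)) = g x.
  move=> x; have : pi (rp (pi x) - x) = 0 by rewrite (klinB pilin) rpK subrr.
  by move/piker/gW; rewrite gB => /eqP; rewrite subr_eq0 => /eqP.
exists (fun q => g (rp q)); split.
  move=> c q q'.
  rewrite -{1}(rpK q) -{1}(rpK q') -(klinZ pilin) -(klinD pilin) gwd gD gZ mulrC //.
by apply: funext => u; exact: gwd.
Qed.

Section Anti.
Variables (S : A -> A) (m m2 : B -> A).
Hypotheses (Slin : klinear S).
Hypotheses (mlin : klinear m) (mt : forall a b, m (t a b) = a * S b) (mD : forall a, m (D a) = e a *: 1).
Hypotheses (m2lin : klinear m2) (m2t : forall a b, m2 (t a b) = S a * b) (m2D : forall a, m2 (D a) = e a *: 1).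

Lemma mleft p w : m (t p 1 * w) = p * m w.
Proof.
apply: (extB (g1 := fun w => m (t p 1 * w)) (g2 := fun w => p * m w)) => //.
- exact: (klin_comp (klin_mull _) mlin).
- exact: (klin_comp mlin (klin_mull _)).
by move=> u v; rewrite tmul mul1r !mt mulrA.
Qed.

Lemma L a c : m (t 1 a * D c) = e c *: S a.
Proof.
set V := fun y => m (t 1 y * D c).
have Vlin : klinear V.
  by move=> c0 u v; rewrite /V tR mulrDl -scalerAl mlin.
have [G [GL GT]] : exists G : T3 A -> A, klinear G /\
    forall x y z, G (t3 x y z) = S x * m (t y z * D c).
  apply: T3map; split; [|split].
  - move=> y z c0 u v /=; by rewrite Slin mulrDl -scalerAl.
  - move=> x z c0 u v /=; by rewrite tL mulrDl -scalerAl mlin mulrDr scalerAr.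
  - move=> x y c0 u v /=; by rewrite tR mulrDl -scalerAl mlin mulrDr scalerAr.
have s1 : forall y w, G (El y w) = m2 w * V y.
  move=> y; apply: (extB (g1 := fun w => G (El y w)) (g2 := fun w => m2 w * V y)).
  - exact: (klin_comp (hEl y).1 GL).
  - exact: (klin_comp m2lin (klin_mulr _)).
  move=> p q; rewrite (hEl y).2 GT m2t /V -mulrA; congr (_ * _).
  by rewrite -mleft mulrA tmul mul1r mulr1.
have s2 : forall w, G (D1' w) = V (gl w).
  apply: extB; [exact: (klin_comp D1l GL)|exact: (klin_comp gllin Vlin)|].
  move=> x0 y0; rewrite D1t s1 m2D glt -scalerAl mul1r.
  by rewrite (klinZ Vlin).
have s3 : forall x w, G (Er x w) = S x * m (w * D c).
  move=> x; apply: extB.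
  - exact: (klin_comp (hEr x).1 GL).
  - exact: (klin_comp (klin_comp (klin_mulr _) mlin) (klin_mull _)).
  by move=> p q; rewrite (hEr x).2 GT.
have s4 : forall w, G (D2' w) = e c *: S (gr w).
  apply: extB; first exact: (klin_comp D2l GL).
    by move=> c0 u v; rewrite grlin Slin scalerDr !scalerA mulrC.
  move=> x0 y0; rewrite D2t s3 -Dmul mD emul grt -scalerAr mulr1.
  by rewrite (klinZ Slin) scalerA mulrC.
by rewrite -{1}(glD a) -[m _]/(V (gl (D a))) -s2 hco s4 grD.
Qed.

Lemma Santi a b : S (a * b) = S b * S a.
Proof.
have [G [GL GT]] : exists G : T3 A -> A, klinear G /\ forall x y z, G (t3 x y z) = S x * m (t y (a * z)).
  apply: T3map; split; [|split].
  - move=> y z c0 u v /=; by rewrite Slin mulrDl -scalerAl.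
  - move=> x z c0 u v /=; by rewrite tL mlin mulrDr scalerAr.
  - move=> x y c0 u v /=; by rewrite mulrDr -scalerAr tR mlin mulrDr scalerAr.
have s1 : forall y w, G (El y w) = m2 w * S (a * y).
  move=> y; apply: (extB (g1 := fun w => G (El y w)) (g2 := fun w => m2 w * S (a * y))).
  - exact: (klin_comp (hEl y).1 GL).
  - exact: (klin_comp m2lin (klin_mulr _)).
  by move=> p q; rewrite (hEl y).2 GT m2t mt mulrA.
have s2 : forall w, G (D1' w) = S (a * gl w).
  apply: extB; first exact: (klin_comp D1l GL).
    exact: (klin_comp gllin (klin_comp (klin_mull _) Slin)).
  move=> x0 y0; rewrite D1t s1 m2D glt -scalerAl mul1r.
  by rewrite -scalerAr (klinZ Slin).
have s3 : forall x w, G (Er x w) = S x * m (t 1 a * w).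
  move=> x; apply: extB.
  - exact: (klin_comp (hEr x).1 GL).
  - exact: (klin_comp (klin_comp (klin_mull _) mlin) (klin_mull _)).
  by move=> p q; rewrite (hEr x).2 GT tmul mul1r.
have s4 : forall w, G (D2' w) = S (gr w) * S a.
  apply: extB; first exact: (klin_comp D2l GL).
    exact: (klin_comp grlin (klin_comp Slin (klin_mulr _))).
  move=> x0 y0; rewrite D2t s3 L grt (klinZ Slin).
  by rewrite -scalerAr -scalerAl.
by rewrite -{1}(glD b) -s2 hco s4 grD.
Qed.

Lemma S1 : S 1 = 1.
Proof. by have := mD 1; rewrite D1 -t11 mt e1 scale1r mul1r. Qed.

Lemma mright b w : m (t 1 b * w) = m w * S b.
Proof.
apply: (extB (g1 := fun w => m (t 1 b * w)) (g2 := fun w => m w * S b)).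
- exact: (klin_comp (klin_mull _) mlin).
- exact: (klin_comp mlin (klin_mulr _)).
by move=> u v; rewrite tmul mul1r !mt Santi mulrA.
Qed.

Lemma mDe a y : m (y * D a) = e a *: m y.
Proof.
apply: (extB (g1 := fun y => m (y * D a)) (g2 := fun y => e a *: m y)) => //.
- exact: (klin_comp (klin_mulr _) mlin).
- by move=> c x z; rewrite mlin !scalerDr !scalerA mulrC.
move=> p q; have -> : t p q = t p 1 * t 1 q by rewrite tmul mul1r mulr1.
by rewrite -mulrA mleft L mleft mt mul1r scalerAr.
Qed.

Lemma QI q : pi (t 1 q) = pi (t (S q) 1).
Proof.
have [G [GL GT]] : exists G : T3 A -> Q, klinear G /\
    forall x y z, G (t3 x y z) = pi (t (S x * y) z).
  apply: T3map; split; [|split].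
  - move=> y z c0 u v /=; by rewrite Slin mulrDl -scalerAl tL pilin.
  - move=> x z c0 u v /=; by rewrite mulrDr -scalerAr tL pilin.
  - move=> x y c0 u v /=; by rewrite tR pilin.
have s1 : forall z w, G (El z w) = pi (t (m2 w) z).
  move=> z; apply: (extB (g1 := fun w => G (El z w)) (g2 := fun w => pi (t (m2 w) z))).
  - exact: (klin_comp (hEl z).1 GL).
  - exact: (klin_comp m2lin (klin_comp (tL z) pilin)).
  by move=> p q0; rewrite (hEl z).2 GT m2t.
have s2 : forall w, G (D1' w) = pi (t 1 (gl w)).
  apply: extB; first exact: (klin_comp D1l GL).
    exact: (klin_comp gllin (klin_comp (tR 1) pilin)).
  by move=> x0 y0; rewrite D1t s1 m2D glt tZl tZr !(klinZ pilin).
have s3 : forall x w, G (Er x w) = pi (t (S x) 1 * w).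
  move=> x; apply: extB.
  - exact: (klin_comp (hEr x).1 GL).
  - exact: (klin_comp (klin_mull _) pilin).
  by move=> p q0; rewrite (hEr x).2 GT tmul mul1r.
have s4 : forall w, G (D2' w) = pi (t (S (gr w)) 1).
  apply: extB; first exact: (klin_comp D2l GL).
    exact: (klin_comp grlin (klin_comp Slin (klin_comp (tL 1) pilin))).
  by move=> x0 y0; rewrite D2t s3 piDe grt (klinZ Slin) tZl (klinZ pilin).
by rewrite -{1}(glD q) -s2 hco s4 grD.
Qed.

Lemma mW x : Wideal D e x -> m x = 0.
Proof.
apply: W_vanish; first exact: (klinD mlin).
by move=> y a; rewrite mulrBr (klinB mlin) mDe -scalerAr mulr1 (klinZ mlin) subrr.
Qed.

Definition psi (q : Q) : A := m (rp q).
Lemma psi_pi x : psi (pi x) = m x.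
Proof.
have : pi (rp (pi x) - x) = 0 by rewrite (klinB pilin) rpK subrr.
by move/piker/mW; rewrite (klinB mlin) => /eqP; rewrite subr_eq0 => /eqP.
Qed.

Lemma part2 :
  (exists psi : Q -> A,
        (forall a b, psi (pi (t a b)) = a * S b) /\
        (forall p q, psi (p + q) = psi p + psi q) /\
        bijective psi /\
        (forall a q, psi (act (t a 1) q) = a * psi q) /\
        (forall b q, psi (act (t 1 b) q) = psi q * S b)) /\
     free_rank_one t act.
Proof.
have inv1 : forall x, pi (t (m x) 1) = pi x.
  apply: (extB (g1 := fun x => pi (t (m x) 1))); first exact: (klin_comp mlin (klin_comp (tL 1) pilin)).
    exact: pilin.
  move=> p q; rewrite mt.
  have -> : t p q = t p 1 * t 1 q by rewrite tmul mul1r mulr1.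
  by rewrite piact QI -piact tmul mulr1.
have psiK : forall a, psi (pi (t a 1)) = a by move=> a; rewrite psi_pi mt S1 mulr1.
split; last first.
  exists (pi (t 1 1)) => q; exists (psi q); split.
    by rewrite -piact tmul mul1r mulr1 /psi inv1 rpK.
  by move=> a ->; rewrite -piact tmul mul1r mulr1 psiK.
exists psi; split; [|split; [|split; [|split]]].
- by move=> a b; rewrite psi_pi mt.
- move=> p q; rewrite -{1}(rpK p) -{1}(rpK q) -(klinD pilin) psi_pi (klinD mlin).
  by rewrite -!psi_pi !rpK.
- exists (fun a => pi (t a 1)); last exact: psiK.
  by move=> q; rewrite /psi inv1 rpK.
- by move=> a q; rewrite -{1}(rpK q) -piact psi_pi mleft -psi_pi rpK.
by move=> b q; rewrite -{1}(rpK q) -piact psi_pi mright -psi_pi rpK.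
Qed.
End Anti.
End Main.

Theorem theorem4p2 (k : comNzRingType) (A B : algType k) (t : A -> A -> B)
  (D : A -> B) (e : A -> k) (Q : lmodType k) (pi : B -> Q) (act : B -> Q -> Q) :
  is_tensor_algebra t ->
  is_bialgebra t D e ->
  is_quotient_by pi act (Wideal D e) ->
  is_preantipode D e act /\
  (forall S : A -> A, is_antipode t D e S ->
     (exists psi : Q -> A,
        (forall a b, psi (pi (t a b)) = a * S b) /\
        (forall p q, psi (p + q) = psi p + psi q) /\
        bijective psi /\
        (forall a q, psi (act (t a 1) q) = a * psi q) /\
        (forall b q, psi (act (t 1 b) q) = psi q * S b)) /\
     is_hopfish t D e act).
Proof.
move=> [Hten [t11 tmul]] [[Dlin [Dmul D1]] [[elin [emul e1]] [[gl [gllin [glt glD]]] [[gr [grlin [grt grD]]] coass]]]] Hq.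
have [El [Er [D1' [D2' [hEl [hEr [D1l [D1t [D2l [D2t hco]]]]]]]]]] := coass (T3 A) (@t3 k A) (t3_tensor A).
have P1 := part1 Dlin D1 elin e1 Hq.
split => // S [Slin [[m2 [m2lin [m2t m2D]]] [m [mlin [mt mD]]]]].
have [P2 P3] := part2 Hten tmul t11 Dmul D1 emul e1 gllin glt glD grlin grt grD hEl hEr
  D1l D1t D2l D2t hco Hq Slin mlin mt mD m2lin m2t m2D.
by split => //; split.
Qed.
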